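(* In the setting described in the context, let $\lambda^*$ be an optimal solution of $\max_{\lambda\in\mathbb{R}^m}d(\lambda)$, and let $\{\lambda^k\}$ be generated by the IAL framework with a nonnegative sequence $\{\eta_k\}$ satisfying $\sum_{k=1}^{+\infty}\eta_k<+\infty$. Then $$\|\lambda^k-\lambda^*\|\le B:=\sqrt{\|\lambda^1-\lambda^*\|^2+2\beta\sum_{k=1}^{+\infty}\eta_k},\qquad k=1,2,\dots.$$
   Context: Let $A\in\mathbb{R}^{m\times n}$ and $b\in\mathbb{R}^m$. Let $f:\mathbb{R}^n\to\mathbb{R}$ be convex and differentiable with Lipschitz continuous gradient. Let $g:\mathbb{R}^n\to\mathbb{R}\cup\{+\infty\}$ be a closed proper convex (possibly nonsmooth) function with bounded domain. Fix a penalty parameter $\beta>0$. For $\lambda\in\mathbb{R}^m$, define $$\hat f_\beta(x;\lambda):=f(x)+\langle\lambda,Ax-b\rangle+\tfrac{\beta}{2}\|Ax-b\|^2,\qquad \mathcal{L}_\beta(x;\lambda):=\hat f_\beta(x;\lambda)+g(x),$$ and $d(\lambda):=\min_{x\in\mathbb{R}^n}\mathcal{L}_\beta(x;\lambda)$. Here $\nabla\hat f_\beta(x;\lambda)$ denotes the gradient of $\hat f_\beta$ with respect to $x$. IAL framework: choose $x^1\in\operatorname{dom} g$, $\lambda^1\in\mathbb{R}^m$, and a nonnegative sequence $\{\eta_k\}$. For $k=1,2,\dots$: find a point $x^{k+1}$ such that $$\max_{x\in\mathbb{R}^n}\Big\{\langle\nabla\hat f_\beta(x^{k+1};\lambda^k),\,x^{k+1}-x\rangle+g(x^{k+1})-g(x)\Big\}\le\eta_k,$$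 and then set $\lambda^{k+1}=\lambda^k+\beta(Ax^{k+1}-b)$. *)

(* Defs.v *)
From HB Require Import structures.
From mathcomp Require Import all_boot all_order all_algebra.
From mathcomp Require Import all_classical all_reals.
From mathcomp Require Import ereal sequences.
Set Implicit Arguments. Unset Strict Implicit. Unset Printing Implicit Defensive.
Import Order.TTheory GRing.Theory Num.Theory.
Local Open Scope ring_scope.

Section IAL.
Variable R : realType.

Definition dotv (n : nat) (u v : 'cV[R]_n) : R := \sum_(i < n) u i 0 * v i 0.
Definition enorm (n : nat) (v : 'cV[R]_n) : R := Num.sqrt (dotv v v).

Definition convex_fun (n : nat) (f : 'cV[R]_n -> R) : Prop :=
  forall x y (t : R), 0 <= t <= 1 ->
    f (t *: x + (1 - t) *: y) <= t * f x + (1 - t) * f y.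

Definition is_gradient (n : nat) (f : 'cV[R]_n -> R) (G : 'cV[R]_n -> 'cV[R]_n)
  : Prop :=
  forall x (e : R), 0 < e -> exists2 del : R, 0 < del &
    forall h, enorm h < del ->
      `| f (x + h) - f x - dotv (G x) h | <= e * enorm h.

Definition lipschitz_map (n : nat) (G : 'cV[R]_n -> 'cV[R]_n) : Prop :=
  exists L : R, forall x y, enorm (G x - G y) <= L * enorm (x - y).

Definition proper_fun (n : nat) (g : 'cV[R]_n -> \bar R) : Prop :=
  (forall x, g x != -oo%E) /\ (exists x, (g x < +oo)%E).

Definition convex_efun (n : nat) (g : 'cV[R]_n -> \bar R) : Prop :=
  forall x y (t : R), 0 <= t <= 1 ->
    (g (t *: x + (1 - t) *: y)%R <= t%:E * g x + (1 - t)%:E * g y)%E.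

(* closed = lower semicontinuous *)
Definition closed_fun (n : nat) (g : 'cV[R]_n -> \bar R) : Prop :=
  forall x (a : \bar R), (a < g x)%E -> exists2 del : R, 0 < del &
    forall y, enorm (y - x) < del -> (a < g y)%E.

Definition bounded_dom (n : nat) (g : 'cV[R]_n -> \bar R) : Prop :=
  exists M : R, forall x, (g x < +oo)%E -> enorm x <= M.

Variables (m n : nat) (A : 'M[R]_(m, n)) (b : 'cV[R]_m) (beta : R)
  (f : 'cV[R]_n -> R) (gradf : 'cV[R]_n -> 'cV[R]_n) (g : 'cV[R]_n -> \bar R).

Definition fhat (x : 'cV[R]_n) (l : 'cV[R]_m) : R :=
  f x + dotv l (A *m x - b) + beta / 2 * enorm (A *m x - b) ^+ 2.

Definition grad_fhat (x : 'cV[R]_n) (l : 'cV[R]_m) : 'cV[R]_n :=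
  gradf x + A^T *m l + beta *: (A^T *m (A *m x - b)).

Definition Lbeta (x : 'cV[R]_n) (l : 'cV[R]_m) : \bar R :=
  ((fhat x l)%:E + g x)%E.

(* d(lambda) = min_x L_beta(x; lambda), written as the infimum *)
Definition dual_fun (l : 'cV[R]_m) : \bar R :=
  ereal_inf [set Lbeta x l | x in [set: 'cV[R]_n]].

Definition ial_gap (x' : 'cV[R]_n) (l : 'cV[R]_m) : \bar R :=
  ereal_sup [set ((dotv (grad_fhat x' l) (x' - y))%:E + g x' - g y)%E
            | y in [set: 'cV[R]_n]].

End IAL.

(* Main.v *)
Require Import Defs.
From HB Require Import structures.
From mathcomp Require Import all_boot all_order all_algebra.
From mathcomp Require Import all_classical all_reals.
From mathcomp Require Import ereal sequences.
From mathcomp Require Import ring lra.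
Import Order.TTheory GRing.Theory Num.Theory.
Local Open Scope ring_scope.

Section Helpers.
Variable R : realType.
Implicit Types (k : nat).

Lemma dotvC {k} (u v : 'cV[R]_k) : dotv u v = dotv v u.
Proof. by rewrite /dotv; apply: eq_bigr => i _; rewrite mulrC. Qed.

Lemma dotvDl {k} (u w v : 'cV[R]_k) : dotv (u + w) v = dotv u v + dotv w v.
Proof. by rewrite /dotv -big_split; apply: eq_bigr => i _; rewrite !mxE mulrDl. Qed.

Lemma dotvNl {k} (u v : 'cV[R]_k) : dotv (- u) v = - dotv u v.
Proof. by rewrite /dotv -sumrN; apply: eq_bigr => i _; rewrite !mxE mulNr. Qed.

Lemma dotvZl {k} a (u v : 'cV[R]_k) : dotv (a *: u) v = a * dotv u v.
Proof. by rewrite /dotv mulr_sumr; apply: eq_bigr => i _; rewrite !mxE mulrA. Qed.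

Lemma dotvBl {k} (u w v : 'cV[R]_k) : dotv (u - w) v = dotv u v - dotv w v.
Proof. by rewrite dotvDl dotvNl. Qed.

Lemma dotvDr {k} (u w v : 'cV[R]_k) : dotv v (u + w) = dotv v u + dotv v w.
Proof. by rewrite dotvC dotvDl !(dotvC v). Qed.

Lemma dotvBr {k} (u w v : 'cV[R]_k) : dotv v (u - w) = dotv v u - dotv v w.
Proof. by rewrite dotvC dotvBl !(dotvC v). Qed.

Lemma dotvNr {k} (u v : 'cV[R]_k) : dotv v (- u) = - dotv v u.
Proof. by rewrite dotvC dotvNl dotvC. Qed.

Lemma dotvZr {k} a (u v : 'cV[R]_k) : dotv v (a *: u) = a * dotv v u.
Proof. by rewrite dotvC dotvZl dotvC. Qed.

Lemma dotv_tr p q (M : 'M[R]_(p, q)) l v : dotv (M^T *m l) v = dotv l (M *m v).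
Proof.
rewrite /dotv.
under eq_bigr do rewrite !mxE big_distrl /=.
rewrite exchange_big; apply: eq_bigr => j _.
rewrite !mxE big_distrr; apply: eq_bigr => i _; rewrite !mxE /=; ring.
Qed.

Lemma dotv_ge0 {k} (v : 'cV[R]_k) : 0 <= dotv v v.
Proof. by apply: sumr_ge0 => i _; rewrite -expr2 sqr_ge0. Qed.

Lemma enorm2 {k} (v : 'cV[R]_k) : enorm v ^+ 2 = dotv v v.
Proof. by rewrite /enorm sqr_sqrtr // dotv_ge0. Qed.

Lemma enorm_ge0 {k} (v : 'cV[R]_k) : 0 <= enorm v.
Proof. exact: sqrtr_ge0. Qed.

Lemma enormZ {k} t (v : 'cV[R]_k) : 0 <= t -> enorm (t *: v) = t * enorm v.
Proof.
move=> t0; rewrite /enorm dotvZl dotvZr mulrA -expr2 sqrtrM ?sqr_ge0 //.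
by rewrite sqrtr_sqr ger0_norm.
Qed.

Lemma cvx_grad {k} (f : 'cV[R]_k -> R) G : convex_fun f -> is_gradient f G ->
  forall x y, f x + dotv (G x) (y - x) <= f y.
Proof.
move=> hc hg x y; set d := y - x.
suff : dotv (G x) d <= f y - f x by lra.
apply/ler_addgt0Pr => e e0.
set D := enorm d.
have D0 : 0 <= D by exact: enorm_ge0.
have e'0 : 0 < e / (D + 1) by rewrite divr_gt0 // ltr_wpDl.
have [del del0 hdel] := hg x _ e'0.
set s := del / (2 * (D + 1)).
have s0 : 0 < s by rewrite divr_gt0 // mulr_gt0 // ltr_wpDl.
have hs : s * (2 * (D + 1)) = del by rewrite /s mulfVK // gt_eqF // mulr_gt0 // ltr_wpDl.
set t := Num.min 1 s.
have t0 : 0 < t by rewrite lt_min ltr01 s0.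
have t1 : t <= 1 by rewrite ge_min lexx.
have ts : t <= s by rewrite ge_min lexx orbT.
have htd : enorm (t *: d) < del.
  rewrite (enormZ _ _ (ltW t0)) -/D.
  have : t * D <= s * D by rewrite ler_wpM2r.
  have := mulr_ge0 (ltW s0) D0.
  have : s * (2 * (D + 1)) = 2 * (s * D) + 2 * s by ring.
  lra.
have := hdel _ htd.
have := hdel _ htd; rewrite (enormZ _ _ (ltW t0)) -/D dotvZr ler_norml => /andP[H1 _].
have hconv := hc y x t.
rewrite t1 ltW //= in hconv.
have hconv' := hconv isT.
have hxe : x + t *: d = t *: y + (1 - t) *: x.
  by apply/matrixP => i j; rewrite !mxE; ring.
rewrite hxe in H1.
have hq : e / (D + 1) * (D + 1) = e by rewrite mulfVK // gt_eqF // ltr_wpDl.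
have he : e / (D + 1) * (t * D) <= t * e.
  have h1 : e / (D + 1) * (t * D) = t * (e / (D + 1) * D) by ring.
  have h2 : e / (D + 1) * D <= e.
    have : e / (D + 1) * (D + 1) = e / (D + 1) * D + e / (D + 1) by ring.
    lra.
  by rewrite h1 ler_pM2l.
have : t * dotv (G x) d <= t * (f y - f x + e) by lra.
by rewrite ler_pM2l.
Qed.

End Helpers.

Theorem lemma3 (R : realType) (m n : nat) (A : 'M[R]_(m, n)) (b : 'cV[R]_m)
  (f : 'cV[R]_n -> R) (gradf : 'cV[R]_n -> 'cV[R]_n) (g : 'cV[R]_n -> \bar R)
  (beta : R)
  (hf_cvx : convex_fun f) (hf_grad : is_gradient f gradf)
  (hf_lip : lipschitz_map gradf)
  (hg_proper : proper_fun g) (hg_cvx : convex_efun g) (hg_closed : closed_fun g)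
  (hg_bdd : bounded_dom g)
  (hbeta : 0 < beta)
  (lstar : 'cV[R]_m)
  (hlstar : forall l, (dual_fun A b beta f g l <= dual_fun A b beta f g lstar)%E)
  (eta : nat -> R) (x : nat -> 'cV[R]_n) (lam : nat -> 'cV[R]_m)
  (heta_nn : forall k, (1 <= k)%N -> 0 <= eta k)
  (heta_sum : (\sum_(1 <= k <oo) (eta k)%:E < +oo)%E)
  (hx1 : (g (x 1%N) < +oo)%E)
  (hx : forall k, (1 <= k)%N ->
          (ial_gap A b beta gradf g (x k.+1) (lam k) <= (eta k)%:E)%E)
  (hlam : forall k, (1 <= k)%N ->
          lam k.+1 = lam k + beta *: (A *m x k.+1 - b)) :
  forall k, (1 <= k)%N ->
    enorm (lam k - lstar) <=
    Num.sqrt (enorm (lam 1%N - lstar) ^+ 2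
              + 2 * beta * fine (\sum_(1 <= k <oo) (eta k)%:E)%E).
Proof.
have Hfin : forall (k : nat), (1 <= k)%N ->
    forall y, ((dotv (grad_fhat A b beta gradf (x k.+1) (lam k)) (x k.+1 - y))%:E
              + g (x k.+1) - g y <= (eta k)%:E)%E.
  move=> k hk y; apply: le_trans (hx k hk).
  by apply: ereal_sup_ubound; exists y.
have step : forall k, (1 <= k)%N ->
   dotv (lam k.+1 - lstar) (lam k.+1 - lstar) <=
   dotv (lam k - lstar) (lam k - lstar) + 2 * beta * eta k.
  move=> k hk.
  have gap := Hfin k hk.
  set l := lam k in gap *; set x' := x k.+1 in gap *.
  have [gx' hgx'] : exists c, g x' = c%:E.
    move: (hg_proper.1 x'); case E: (g x') => [c| |] // _; first by exists c.
    exfalso.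
    have [c1 hc1] : exists c, g (x 1%N) = c%:E.
      move: (hg_proper.1 (x 1%N)) hx1; case: (g (x 1%N)) => [c| |] //.
      by exists c.
    have := gap (x 1%N); rewrite E hc1.
    by rewrite addey // leNgt ltey.
  have C1 : ((f x' + gx' + dotv (l + beta *: (A *m x' - b)) (A *m x' - b) - eta k)%:E
             <= dual_fun A b beta f g (l + beta *: (A *m x' - b)))%E.
    apply: le_ereal_inf_tmp => z [y _ <-].
    rewrite /Lbeta /fhat.
    move: (hg_proper.1 y) (gap y); rewrite hgx'.
    case: (g y) => [c| |] // _; last first.
      by move=> _; rewrite addey // leey.
    rewrite -?EFinD -?EFinD !lee_fin => hgap.
    have hc := @cvx_grad R n f gradf hf_cvx hf_grad x' y.
    have eAxy : A *m (x' - y) = (A *m x' - b) - (A *m y - b).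
      by rewrite mulmxBr opprB addrA subrK.
    move: hgap hc; rewrite /grad_fhat !dotvDl dotvZl !dotv_tr eAxy enorm2.
    have := mulr_ge0 (ltW (divr_gt0 hbeta (ltr0n R 2))) (@dotv_ge0 R _ (A *m y - b)).
    move: (A *m x' - b) (A *m y - b) => r s.
    rewrite !dotvBr !dotvZl.
    lra.
  have C2 : (dual_fun A b beta f g lstar <=
     (f x' + gx' + dotv lstar (A *m x' - b) + beta / 2 * dotv (A *m x' - b) (A *m x' - b))%:E)%E.
    apply: ereal_inf_lbound; exists x' => //.
    by rewrite /Lbeta /fhat hgx' enorm2 -EFinD; congr (_%:E); ring.
  have := le_trans C1 (le_trans (hlstar _) C2); rewrite lee_fin => H.
  rewrite (hlam k hk) -/l -/x'.
  move: H; move: (A *m x' - b) => r.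
  rewrite ?dotvDl ?dotvBl ?dotvDr ?dotvBr ?dotvZl ?dotvZr.
  rewrite ?dotvNl ?dotvNr.
  rewrite ?(@dotvC R _ r l) ?(@dotvC R _ r lstar) ?(@dotvC R _ lstar l).
  move=> H.
  have : 0 <= beta * (eta k + dotv lstar r + beta / 2 * dotv r r - dotv l r - beta * dotv r r).
    apply: mulr_ge0; [exact: ltW | lra].
  lra.
have ind : forall k, (1 <= k)%N ->
   dotv (lam k - lstar) (lam k - lstar) <=
   dotv (lam 1%N - lstar) (lam 1%N - lstar) + 2 * beta * \sum_(1 <= j < k) eta j.
  elim=> [//|k IH] hk.
  case: k IH hk => [|k] IH hk.
    by rewrite big_geq // mulr0 addr0.
  rewrite big_nat_recr //=.
  have := IH isT; have := step k.+1 isT; lra.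
move=> k hk.
have S0 : (0 <= \sum_(1 <= j <oo) (eta j)%:E)%E.
  by apply: nneseries_ge0 => j hj _; rewrite lee_fin heta_nn.
have Sfin : (\sum_(1 <= j <oo) (eta j)%:E)%E \is a fin_num by rewrite ge0_fin_numE.
have Hpart : \sum_(1 <= j < k) eta j <= fine (\sum_(1 <= j <oo) (eta j)%:E)%E.
  rewrite -lee_fin fineK // -sumEFin.
  by apply: nneseries_lim_ge => j hj _; rewrite lee_fin heta_nn.
rewrite /enorm; apply: ler_wsqrtr.
rewrite -/(enorm _) enorm2.
apply: le_trans (ind k hk) _.
rewrite lerD2l ler_pM2l //.
by rewrite mulr_gt0.
Qed.
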